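(* Let $G$ be a finite, connected, simple, bridgeless, triangle-free cubic graph, and let $\Lambda$ be a valid labeling of $\mathfrak{L}_2(G)$. Let $\mathfrak{G}_\Lambda$ be the graph with vertex set $\Gamma_\Lambda$ in which $\gamma,\phi\in\Gamma_\Lambda$ are joined by a single edge (a loop if $\gamma=\phi$) if and only if $\gamma$ and $\phi$ are adjacent. Then $\mathfrak{G}_\Lambda$ is a connected graph, simple apart from possible loops.
   Context: $\mathcal{L}(H)$ is the line graph of $H$. Let $\mathcal{T}$ be the set of triangles of $\mathcal{L}(\mathcal{L}(G))$ formed by the three edges of a triangle of $\mathcal{L}(G)$. $\mathfrak{L}_2(G)$ has the vertex set of $\mathcal{L}(\mathcal{L}(G))$ and the edges of $\mathcal{L}(\mathcal{L}(G))$ not in any triangle of $\mathcal{T}$. For each edge $e$ of $G$, the reduced clique $\mathbb{X}_e$ is the subgraph of $\mathfrak{L}_2(G)$ on the four edges of $\mathcal{L}(G)$ incident to $e$, with all edges of $\mathfrak{L}_2(G)$ among them (a 4-cycle); $\mathcal{X}$ is the set of reduced cliques. A labeling $\Lambda$ gives each edge of $\mathfrak{L}_2(G)$ a label in $\{0,1\}$ ($1$ = open); it is valid if in every reduced clique each vertex is incident to two edges of that clique with different labels. $\Gamma_\Lambda$ is the set of connected components (cycles) of the subgraph formed by the open edges. Two cycles $\gamma_1,\gamma_2\in\Gamma_\Lambda$ are adjacent if there is a reduced clique $\mathbb{X}\in\mathcal{X}$ containing an edge of $\gamma_1$ and an edge of $\gamma_2$. *)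

(* Defs.v *)
From mathcomp Require Import all_boot.
Set Implicit Arguments. Unset Strict Implicit. Unset Printing Implicit Defensive.

Section Defs.

Variable T : finType.

Definition line_verts (A : {set T}) (r : rel T) : {set {set T}} :=
  [set e : {set T} | [exists x in A, exists y in A, r x y && (e == [set x; y])]].

Definition line_rel (A : {set T}) (r : rel T) : rel {set T} :=
  fun e f => [&& e \in line_verts A r, f \in line_verts A r, e != f
                 & ~~ [disjoint e & f]].

End Defs.

Section Frak.
Variables (V : finType) (adj : rel V).

Definition LV : {set {set V}} := line_verts [set: V] adj.
Definition LR : rel {set V} := line_rel [set: V] adj.
Definition LLV : {set {set {set V}}} := line_verts LV LR.
Definition LLR : rel {set {set V}} := line_rel LV LR.

(* the edge {P,Q} of L(L(G)) lies in a triangle of T, i.e. a triangle of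
   L(L(G)) formed by the three edges {e,f},{f,g},{e,g} of a triangle e,f,g of L(G) *)
Definition in_T_triangle (P Q : {set {set V}}) : bool :=
  [exists e, exists f, exists g,
     [&& LR e f, LR f g, LR e g,
         P \in [set [set e; f]; [set f; g]; [set e; g]]
       & Q \in [set [set e; f]; [set f; g]; [set e; g]]]].

Definition L2R : rel {set {set V}} := fun P Q => LLR P Q && ~~ in_T_triangle P Q.

(* a labeling assigns a label to each edge {P,Q} of frak L_2(G) (only its
   values on such edges matter); true = 1 = open *)
Definition labeling := {set {set {set V}}} -> bool.

Definition Xverts (e : {set V}) : {set {set {set V}}} :=
  [set P in LLV | e \in P].

Definition valid (lab : labeling) : Prop :=
  forall e, e \in LV -> forall P, P \in Xverts e ->
    exists Q R, [/\ Q \in Xverts e, R \in Xverts e, L2R P Q, L2R P R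
                  & lab [set P; Q] != lab [set P; R]].

Definition opn (lab : labeling) : rel {set {set V}} :=
  fun P Q => L2R P Q && lab [set P; Q].

Definition Gamma (lab : labeling) : {set {set {set {set V}}}} :=
  [set [set Q | connect (opn lab) P Q] | P in [set P | [exists Q, opn lab P Q]]].

Definition cyc_adj (lab : labeling) : rel {set {set {set V}}} :=
  fun g1 g2 =>
    [&& g1 \in Gamma lab, g2 \in Gamma lab &
     [exists e in LV, exists P, exists Q, exists P', exists Q',
        [&& opn lab P Q, P \in g1, Q \in g1, e \in P, e \in Q,
            opn lab P' Q', P' \in g2, Q' \in g2, e \in P' & e \in Q']]].

End Frak.

Definition simple_graph (V : finType) (adj : rel V) : Prop :=
  symmetric adj /\ irreflexive adj.

Definition cubic (V : finType) (adj : rel V) : Prop :=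
  forall v, #|[set w | adj v w]| = 3.

Definition connected_graph (V : finType) (adj : rel V) : Prop :=
  forall u v, connect adj u v.

Definition bridgeless (V : finType) (adj : rel V) : Prop :=
  forall u v, adj u v ->
    connect (fun x y => adj x y && ([set x; y] != [set u; v])) u v.

Definition triangle_free (V : finType) (adj : rel V) : Prop :=
  forall u v w, adj u v -> adj v w -> ~~ adj w u.

(* Main.v *)
Require Import Defs.
From mathcomp Require Import all_boot.
Set Implicit Arguments. Unset Strict Implicit.

Section Proof.
Variables (V : finType) (adj : rel V) (lab : labeling V).

Definition Cy P := [set Q | connect (opn adj lab) P Q].

Definition atv v (P : {set {set V}}) := exists x y,
  [/\ x \in LV adj, y \in LV adj, x != y, v \in x & v \in y] /\ P = [set x; y].

Lemma atv_LLV v P : atv v P -> P \in LLV adj.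
Proof.
case => x [y [[Hx Hy Hxy Hvx Hvy] ->]].
rewrite /LLV /line_verts inE.
apply/existsP; exists x; rewrite Hx /=; apply/existsP; exists y; rewrite Hy /= eqxx andbT.
rewrite /LR /line_rel Hx Hy Hxy /= -setI_eq0; apply/set0Pn; exists v.
by rewrite inE Hvx Hvy.
Qed.

Lemma LLV_atv P : P \in LLV adj -> exists v, atv v P.
Proof.
rewrite inE => /existsP [x /andP [Hx /existsP [y /andP [Hy /andP [HR /eqP ->]]]]].
move: HR; rewrite /LR /line_rel => /and4P [_ _ Hxy Hd].
rewrite -setI_eq0 in Hd; case/set0Pn: Hd => v; rewrite inE => /andP [Hvx Hvy].
by exists v, x, y.
Qed.

Lemma LLV_LV P e : P \in LLV adj -> e \in P -> e \in LV adj.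
Proof.
move/LLV_atv => [v [x [y [[Hx Hy _ _ _] ->]]]].
by rewrite in_set2 => /orP [/eqP->|/eqP->].
Qed.

Hypothesis Hval : valid adj lab.

Lemma open_at P e : P \in LLV adj -> e \in P -> exists Q : {set {set V}}, (e \in Q) /\ opn adj lab P Q.
Proof.
move=> HP He.
have HeV := LLV_LV HP He.
have HPx : P \in Xverts adj e by rewrite inE HP He.
have [Q [R [HQ HR HPQ HPR Hne]]] := Hval HeV HPx.
case HlQ: (lab [set P; Q]).
  exists Q; split; first by move: HQ; rewrite inE => /andP [_ ->].
  by rewrite /opn HPQ HlQ.
exists R; split; first by move: HR; rewrite inE => /andP [_ ->].
by move: Hne; rewrite /opn HPR HlQ; case: (lab _).
Qed.

Lemma Cy_Gamma P Q : opn adj lab P Q -> Cy P \in Gamma adj lab.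
Proof.
move=> H; apply/imsetP; exists P => //; rewrite inE; apply/existsP; by exists Q.
Qed.

Lemma Gamma_Cy g : g \in Gamma adj lab -> exists2 P, P \in LLV adj & g = Cy P.
Proof.
case/imsetP => P; rewrite inE => /existsP [Q HQ] ->; exists P => //.
move: HQ; rewrite /opn /L2R /LLR /line_rel => /andP [/andP [/and4P [H _ _ _] _] _].
exact H.
Qed.

Lemma Dshare P P' e : P \in LLV adj -> P' \in LLV adj -> e \in P -> e \in P' ->
  cyc_adj adj lab (Cy P) (Cy P').
Proof.
move=> HP HP' He He'.
have [Q [HeQ HQ]] := open_at HP He.
have [Q' [HeQ' HQ']] := open_at HP' He'.
rewrite /cyc_adj (Cy_Gamma HQ) (Cy_Gamma HQ') /=.
apply/existsP; exists e; rewrite (LLV_LV HP He) /=.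
apply/existsP; exists P; apply/existsP; exists Q; apply/existsP; exists P';
apply/existsP; exists Q'.
by rewrite HQ HQ' /Cy !inE !connect0 !connect1 // He He' HeQ HeQ'.
Qed.

Definition K P Q := connect (cyc_adj adj lab) (Cy P) (Cy Q).

Lemma mk_atv v e f : e \in LV adj -> f \in LV adj -> e != f -> v \in e -> v \in f ->
  atv v [set e; f].
Proof. by move=> *; exists e, f. Qed.

Lemma E1 v P Q : atv v P -> atv v Q -> K P Q.
Proof.
move=> HP HQ.
move: (HP) (HQ) => [x [y [[Hx Hy Hxy Hvx Hvy] EP]]] [z [w [[Hz Hw Hzw Hvz Hvw] EQ]]].
case: (eqVneq y z) => [Eyz|Hyz].
  apply: connect1; apply: (Dshare (e := y)) (atv_LLV HP) (atv_LLV HQ) _ _;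
  by rewrite ?EP ?EQ -?Eyz !inE eqxx ?orbT.
have Hm : atv v [set y; z] by apply: mk_atv.
apply: connect_trans.
  apply: connect1; apply: (Dshare (e := y)) (atv_LLV HP) (atv_LLV Hm) _ _;
  by rewrite ?EP !inE eqxx ?orbT.
apply: connect1; apply: (Dshare (e := z)) (atv_LLV Hm) (atv_LLV HQ) _ _;
by rewrite ?EQ !inE eqxx ?orbT.
Qed.

Hypothesis Hs : simple_graph adj.
Hypothesis Hcub : cubic adj.

Lemma nbr w u : exists z, adj w z && (z != u).
Proof.
case: (pickP (fun z => adj w z && (z != u))) => [z Hz|H]; first by exists z.
have : [set z | adj w z] \subset [set u].
  apply/subsetP => z; rewrite !inE => Hz; move: (H z); rewrite Hz /=.
  by move/negbT; rewrite negbK.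
by move/subset_leq_card; rewrite cards1 Hcub.
Qed.

Lemma inLV a b : adj a b -> [set a; b] \in LV adj.
Proof.
move=> H; rewrite /LV /line_verts inE; apply/existsP; exists a; rewrite in_setT /=.
apply/existsP; exists b; by rewrite in_setT H eqxx.
Qed.

Lemma Epath p u : path adj u p -> forall P Q, atv u P -> atv (last u p) Q -> K P Q.
Proof.
elim: p u => [|w p IH] u /=; first by move=> _ P Q; apply: E1.
case/andP => Huw Hp P Q HP HQ.
have [z /andP [Hwz Hzu]] := nbr w u.
set e := [set u; w]; set f := [set w; z].
have He : e \in LV adj by apply: inLV.
have Hf : f \in LV adj by apply: inLV.
have Hef : e != f.
  apply/negP => /eqP Eef.
  have : z \in e by rewrite Eef !inE eqxx orbT.
  rewrite !inE (negbTE Hzu) /= => /eqP Ezw.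
  by move: Hwz; rewrite Ezw (proj2 Hs).
have Hwa : atv w [set e; f] by apply: mk_atv; rewrite // !inE eqxx ?orbT.
have HK2 : K [set e; f] Q := IH w Hp _ _ Hwa HQ.
move: (HP) => [x [y [[Hx Hy Hxy Hvx Hvy] EP]]].
have [g [Hg Heg Hug]] : exists g, [/\ g \in LV adj, e != g & u \in g].
  case: (eqVneq x e) => [Exe|Hxe].
    by exists y; split => //; rewrite -Exe.
  by exists x; split => //; rewrite eq_sym.
have Hua : atv u [set e; g] by apply: mk_atv; rewrite // !inE eqxx.
apply: connect_trans (E1 HP Hua) _.
apply: connect_trans _ HK2.
apply: connect1; apply: (Dshare (e := e)) (atv_LLV Hua) (atv_LLV Hwa) _ _;
by rewrite !inE eqxx.
Qed.

End Proof.

Theorem lemma2p11 (V : finType) (adj : rel V)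
  (Hs : simple_graph adj) (Hcub : cubic adj) (Hcon : connected_graph adj)
  (Hbr : bridgeless adj) (Htf : triangle_free adj)
  (lab : labeling V) (Hval : valid adj lab) :
  forall g phi, g \in Gamma adj lab -> phi \in Gamma adj lab ->
    connect (cyc_adj adj lab) g phi.
Proof.
move=> g phi /Gamma_Cy [P HP ->] /Gamma_Cy [Q HQ ->].
have [v Hv] := LLV_atv HP.
have [u Hu] := LLV_atv HQ.
have /connectP [p Hp Eu] := Hcon v u.
apply: (Epath Hval Hs Hcub Hp Hv); by rewrite -Eu.
Qed.
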